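(* Let $H$ be a real or complex Hilbert space of dimension $n$, let $N\ge n$, let $F=\{f_i\}_{i=1}^N$ be a frame for $H$ with frame operator $S_F$, and let $\{q_i\}_{i=1}^N$ be a weight number sequence. Set $c=\max\{q_i\|S_F^{-1/2}f_i\|^2:1\le i\le N\}$, $\Upsilon_1=\{i:q_i\|S_F^{-1/2}f_i\|^2=c\}$, $\Upsilon_2=\{1,\dots,N\}\setminus\Upsilon_1$, and $H_j=\operatorname{span}\{f_i:i\in\Upsilon_j\}$ for $j=1,2$. Suppose $H_1\cap H_2=\{0\}$ and $|\Upsilon_1|\ge2$. Suppose also that for all $i\neq j$ $$\big|\langle S_F^{-1/2}f_i,S_F^{-1/2}f_j\rangle\big|=\sqrt{\frac{1}{q_iq_j}\cdot\frac{n-\sum_{k=1}^N\frac{1}{q_k^2}}{\sum_{r\ne s}\frac{1}{q_rq_s}}}.$$ Then the canonical dual $\{S_F^{-1}f_i\}_{i=1}^N$ is a 2-erasure probabilistic spectrally optimal dual of $F$.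
   Context: Inner products are linear in the first argument. A frame for $H$ is a finite sequence spanning $H$. Analysis operator: $\Theta_F f=(\langle f,f_i\rangle)_i$. Synthesis operator: $\Theta_G^*(c)=\sum_i c_ig_i$. Frame operator: $S_F=\Theta_F^*\Theta_F$. A dual of $F$ is a frame $G=\{g_i\}_{i=1}^N$ with $f=\sum_i\langle f,f_i\rangle g_i=\sum_i\langle f,g_i\rangle f_i$ for all $f$. A probability sequence satisfies $0\le p_i\le1$ and $\sum p_i=1$. Weight numbers: $q_i=\frac{\sum_j p_j}{\sum_j p_j-p_i}\cdot\frac{N-1}{n}$ (assumed well defined). For $m\in\{1,2\}$, $\mathcal{D}_m^p$ is the set of $N\times N$ diagonal matrices $D$ for which there is $\Lambda\subseteq\{1,\dots,N\}$ with $|\Lambda|=m$, $D_{ii}=q_i$ for $i\in\Lambda$ and $0$ otherwise. $\mathcal{R}_m^p(F,G)=\max\{\rho(\Theta_G^*D\Theta_F):D\in\mathcal{D}_m^p\}$, with $\rho$ the spectral radius. A dual $G$ is a 1-erasure probabilistic spectrally optimal dual of $F$ if $\mathcal{R}_1^p(F,G)=\inf\{\mathcal{R}_1^p(F,G'): G'\text{ a dual of }F\}$. A dual $G$ is a 2-erasure probabilistic spectrally optimal dual of $F$ if it is a 1-erasure probabilistic spectrally optimal dual of $F$ and $\mathcal{R}_2^p(F,G)=\inf\{\mathcal{R}_2^p(F,G'): G'\text{ a 1-erasure probabilistic spectrally optimal dual of }F\}$. The sum $\sum_{r\ne s}$ runs over ordered pairs $(r,s)$ with $r\ne s$. *)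

(* Defs.v *)
From HB Require Import structures.
From mathcomp Require Import all_boot all_order all_algebra.
Set Implicit Arguments. Unset Strict Implicit. Unset Printing Implicit Defensive.
Import Order.TTheory GRing.Theory Num.Theory.
Local Open Scope ring_scope.

(* H = K^n with standard inner product, K = R (realcase = true) or C
   (realcase = false), both embedded in a numClosedFieldType C.
   Vectors are row vectors; operators act on the right: T f = f *m M. *)

Section Frames.
Variable C : numClosedFieldType.

Definition scal (realcase : bool) (z : C) : bool :=
  if realcase then z \is Num.real else true.

Definition inH (realcase : bool) n (f : 'rV[C]_n) : Prop :=
  forall k, scal realcase (f 0 k).

Definition dot n (x y : 'rV[C]_n) : C := \sum_(k < n) x 0 k * (y 0 k)^*.

Definition adjmx m n (M : 'M[C]_(m, n)) : 'M[C]_(n, m) := (map_mx Num.conj M)^T.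

Definition inspan (realcase : bool) n N (F : 'I_N -> 'rV[C]_n)
  (A : {set 'I_N}) (x : 'rV[C]_n) : Prop :=
  exists c : 'I_N -> C, (forall i, scal realcase (c i)) /\
    x = \sum_(i in A) c i *: F i.

Definition is_frame (realcase : bool) n N (F : 'I_N -> 'rV[C]_n) : Prop :=
  (forall i, inH realcase (F i)) /\
  (forall f, inH realcase f -> inspan realcase F setT f).

(* matrix of the frame operator S_F = Theta_F^* Theta_F : f |-> sum <f,f_i> f_i *)
Definition frame_op n N (F : 'I_N -> 'rV[C]_n) : 'M[C]_n :=
  \sum_(i < N) adjmx (F i) *m F i.

Definition is_dual (realcase : bool) n N (F G : 'I_N -> 'rV[C]_n) : Prop :=
  is_frame realcase G /\
  forall f, inH realcase f ->
    f = \sum_(i < N) dot f (F i) *: G i /\ f = \sum_(i < N) dot f (G i) *: F i.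

Definition canonical_dual n N (F : 'I_N -> 'rV[C]_n) : 'I_N -> 'rV[C]_n :=
  fun i => F i *m invmx (frame_op F).

Definition psd n (P : 'M[C]_n) : Prop :=
  adjmx P = P /\ forall x : 'rV[C]_n, 0 <= dot (x *m P) x.

Definition eigseq n (A : 'M[C]_n) : seq C :=
  sval (closed_field_poly_normal (char_poly A)).
Definition specrad n (A : 'M[C]_n) : C :=
  \big[Num.max/0]_(z <- eigseq A) `|z|.

Definition probability_seq N (p : 'I_N -> C) : Prop :=
  (forall i, 0 <= p i <= 1) /\ \sum_(i < N) p i = 1.

Definition weight (n N : nat) (p : 'I_N -> C) (i : 'I_N) : C :=
  (\sum_(j < N) p j) / (\sum_(j < N) p j - p i) * ((N - 1)%:R / n%:R).

(* Theta_G^* D Theta_F for D = diag(q on Lambda, 0 elsewhere) *)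
Definition erasure_op n N (q : 'I_N -> C) (F G : 'I_N -> 'rV[C]_n)
  (L : {set 'I_N}) : 'M[C]_n :=
  \sum_(i in L) q i *: (adjmx (F i) *m G i).

Definition Rmp (m : nat) n N (q : 'I_N -> C) (F G : 'I_N -> 'rV[C]_n) : C :=
  \big[Num.max/0]_(L : {set 'I_N} | #|L| == m) specrad (erasure_op q F G L).

Definition opt1 (realcase : bool) n N (q : 'I_N -> C) (F G : 'I_N -> 'rV[C]_n)
  : Prop :=
  is_dual realcase F G /\
  forall G', is_dual realcase F G' -> Rmp 1 q F G <= Rmp 1 q F G'.

Definition opt2 (realcase : bool) n N (q : 'I_N -> C) (F G : 'I_N -> 'rV[C]_n)
  : Prop :=
  opt1 realcase q F G /\
  forall G', opt1 realcase q F G' -> Rmp 2 q F G <= Rmp 2 q F G'.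

End Frames.

(* Main.v *)
Require Import Defs.
From HB Require Import structures.
From mathcomp Require Import all_boot all_order all_algebra.
From mathcomp Require Import ring.
Import Order.TTheory GRing.Theory Num.Theory.
Local Open Scope ring_scope.
Set Implicit Arguments. Unset Strict Implicit. Unset Printing Implicit Defensive.

Section Aux.
Variable C : numClosedFieldType.

Lemma dotE n (x y : 'rV[C]_n) : x *m adjmx y = (dot x y)%:M.
Proof.
apply/matrixP => i j; rewrite !ord1 !mxE eqxx mulr1n /dot.
by apply: eq_bigr => k _; rewrite !mxE.
Qed.

Lemma dot_mulA n (x y z : 'rV[C]_n) : x *m (adjmx y *m z) = dot x y *: z.
Proof. by rewrite mulmxA dotE mul_scalar_mx. Qed.

Lemma tr_adj n (y z : 'rV[C]_n) : \tr (adjmx y *m z) = dot z y.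
Proof. by rewrite mxtrace_mulC dotE mxtrace_scalar. Qed.

Lemma conj_dot n (x y : 'rV[C]_n) : (dot x y)^* = dot y x.
Proof.
rewrite /dot rmorph_sum; apply: eq_bigr => k _.
by rewrite rmorphM /= conjCK mulrC.
Qed.

Lemma dot_ge0 n (x : 'rV[C]_n) : 0 <= dot x x.
Proof. by apply: sumr_ge0 => k _; rewrite -normCK exprn_ge0. Qed.

Lemma dot_eq0 n (x : 'rV[C]_n) : dot x x = 0 -> x = 0.
Proof.
move=> h; apply/rowP => k; rewrite mxE.
have hk := @psumr_eq0P C _ predT (fun k => x 0 k * (x 0 k)^*)
  (fun i _ => ltac:(by rewrite /= -normCK exprn_ge0)) h k isT.
by move: hk; rewrite -normCK => /eqP; rewrite expf_eq0 /= normr_eq0 => /eqP.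
Qed.

Lemma dotDl n (x y z : 'rV[C]_n) : dot (x + y) z = dot x z + dot y z.
Proof. by rewrite /dot -big_split; apply: eq_bigr => k _; rewrite mxE mulrDl. Qed.

Lemma dotZl n a (x z : 'rV[C]_n) : dot (a *: x) z = a * dot x z.
Proof. by rewrite /dot mulr_sumr; apply: eq_bigr => k _; rewrite mxE mulrA. Qed.

Lemma dotNl n (x z : 'rV[C]_n) : dot (- x) z = - dot x z.
Proof. by rewrite -scaleN1r dotZl mulN1r. Qed.

Lemma dot0l n (z : 'rV[C]_n) : dot 0 z = 0.
Proof. by rewrite /dot big1 // => k _; rewrite mxE mul0r. Qed.

Lemma dot_suml n (I : finType) (P : pred I) (a : I -> C) (x : I -> 'rV[C]_n) z :
  dot (\sum_(i | P i) a i *: x i) z = \sum_(i | P i) a i * dot (x i) z.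
Proof.
elim/big_rec2: _ => [|i s t _ IH]; first by rewrite dot0l.
by rewrite dotDl dotZl ?IH // -IH.
Qed.

Lemma dotZr n a (x z : 'rV[C]_n) : dot z (a *: x) = a^* * dot z x.
Proof. by rewrite -conj_dot dotZl rmorphM /= conj_dot. Qed.

Lemma dotDr n (x y z : 'rV[C]_n) : dot z (x + y) = dot z x + dot z y.
Proof. by rewrite -conj_dot dotDl rmorphD /= !conj_dot. Qed.

Lemma dot_sumr n (I : finType) (P : pred I) (a : I -> C) (x : I -> 'rV[C]_n) z :
  dot z (\sum_(i | P i) a i *: x i) = \sum_(i | P i) (a i)^* * dot z (x i).
Proof.
rewrite -conj_dot dot_suml rmorph_sum; apply: eq_bigr => i _ /=.
by rewrite rmorphM /= conj_dot.
Qed.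

Lemma adjmxK m n (M : 'M[C]_(m, n)) : adjmx (adjmx M) = M.
Proof. by apply/matrixP => i j; rewrite !mxE conjCK. Qed.

Lemma adjmxM m n p (A : 'M[C]_(m, n)) (B : 'M[C]_(n, p)) :
  adjmx (A *m B) = adjmx B *m adjmx A.
Proof. by rewrite /adjmx map_mxM trmx_mul. Qed.

Lemma adjmxD m n (A B : 'M[C]_(m, n)) : adjmx (A + B) = adjmx A + adjmx B.
Proof. by apply/matrixP => i j; rewrite !mxE rmorphD. Qed.

Lemma adjmxZ m n a (A : 'M[C]_(m, n)) : adjmx (a *: A) = a^* *: adjmx A.
Proof. by apply/matrixP => i j; rewrite !mxE rmorphM. Qed.

Lemma adjmx0 m n : adjmx (0 : 'M[C]_(m, n)) = 0.
Proof. by apply/matrixP => i j; rewrite !mxE rmorph0. Qed.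

Lemma dot_mxr n (x y : 'rV[C]_n) M : dot (x *m M) y = dot x (y *m adjmx M).
Proof.
have dE (a b : 'rV[C]_n) : dot a b = (a *m adjmx b) 0 0.
  by rewrite dotE mxE eqxx mulr1n.
by rewrite !dE adjmxM adjmxK mulmxA.
Qed.

Lemma dot_mxl n (x y : 'rV[C]_n) M : dot x (y *m M) = dot (x *m adjmx M) y.
Proof. by rewrite dot_mxr adjmxK. Qed.

Lemma normC2_dot n (x y : 'rV[C]_n) : dot x y * dot y x = `|dot x y| ^+ 2.
Proof. by rewrite normCK conj_dot. Qed.


Lemma max_cases (x y : C) : Num.max x y = x \/ Num.max x y = y.
Proof. rewrite maxElt; case: ifP; by [right|left]. Qed.

Lemma max_geL (x y : C) : 0 <= x -> 0 <= y -> x <= Num.max x y.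
Proof.
move=> hx hy; rewrite maxElt; case: ifP => // /ltW //.
Qed.

Lemma max_geR (x y : C) : 0 <= x -> 0 <= y -> y <= Num.max x y.
Proof.
move=> hx hy; rewrite maxElt; case: ifP => // /negbT.
by rewrite real_ltNge ?ger0_real // negbK.
Qed.

Lemma bm_ge0 (I : Type) (r : seq I) (P : pred I) (F : I -> C) :
  (forall i, P i -> 0 <= F i) -> 0 <= \big[Num.max/0]_(i <- r | P i) F i.
Proof.
move=> h; elim/big_rec: _ => // i x Pi hx.
by case: (max_cases (F i) x) => ->; rewrite ?h.
Qed.

Lemma bm_le (I : Type) (r : seq I) (P : pred I) (F : I -> C) B :
  0 <= B -> (forall i, P i -> F i <= B) -> \big[Num.max/0]_(i <- r | P i) F i <= B.
Proof.
move=> hB h; elim/big_rec: _ => // i x Pi hx.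
by case: (max_cases (F i) x) => ->; rewrite ?h.
Qed.

Lemma bm_ub (I : eqType) (r : seq I) (P : pred I) (F : I -> C) j :
  (forall i, P i -> 0 <= F i) -> j \in r -> P j ->
  F j <= \big[Num.max/0]_(i <- r | P i) F i.
Proof.
move=> h; elim: r => // a r IH; rewrite in_cons big_cons => /orP [/eqP -> | jr] Pj.
  by rewrite Pj max_geL ?h ?bm_ge0.
have := IH jr Pj; case: ifP => // Pa hj.
by apply: le_trans hj _; rewrite max_geR ?h ?bm_ge0.
Qed.

Lemma specrad_ge0 n (A : 'M[C]_n) : 0 <= specrad A.
Proof. by apply: bm_ge0 => i _; rewrite normr_ge0. Qed.

Lemma eig_in n (A : 'M[C]_n) (z : C) : root (char_poly A) z = (z \in eigseq A).
Proof.
rewrite /eigseq; case: (closed_field_poly_normal (char_poly A)) => r /= hr.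
rewrite {1}hr (monicP (char_poly_monic A)) scale1r.
by rewrite root_prod_XsubC.
Qed.

Lemma specrad_lb n (A : 'M[C]_n) (l : C) (v : 'rV[C]_n) :
  v *m A = l *: v -> v != 0 -> `|l| <= specrad A.
Proof.
move=> hv v0.
have : eigenvalue A l by apply/eigenvalueP; exists v.
rewrite eigenvalue_root_char eig_in => hl.
by apply: (bm_ub (F := fun z => `|z|)) => // i _; rewrite normr_ge0.
Qed.

Lemma specrad_ub n (A : 'M[C]_n) B :
  0 <= B ->
  (forall (l : C) (v : 'rV[C]_n), v *m A = l *: v -> v != 0 -> `|l| <= B) ->
  specrad A <= B.
Proof.
move=> hB h; rewrite /specrad.
rewrite big_seq_cond; apply: bm_le => // z /andP[zin _].
move: zin; rewrite -eig_in -eigenvalue_root_char => /eigenvalueP [v hv v0].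
exact: h hv v0.
Qed.

Lemma specrad_rank1 n (f g : 'rV[C]_n) : specrad (adjmx f *m g) = `|dot g f|.
Proof.
apply/eqP; rewrite eq_le; apply/andP; split.
  apply: specrad_ub => // l v; rewrite dot_mulA => hv v0.
  have e : l * dot v f = dot v f * dot g f.
    by rewrite -dotZl -hv dotZl.
  have [d0|d0] := eqVneq (dot v f) 0.
    move: hv; rewrite d0 scale0r => /esym /eqP; rewrite scaler_eq0 (negbTE v0) orbF.
    by move/eqP => ->; rewrite normr0 normr_ge0.
  by move: e; rewrite mulrC => /(mulfI d0) ->.
have [d0|d0] := eqVneq (dot g f) 0; first by rewrite d0 normr0 specrad_ge0.
apply: (specrad_lb (v := g)); first by rewrite dot_mulA.
by apply: contraNneq d0 => ->; rewrite dot0l.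
Qed.


Section Rank2.
Variables (n : nat) (f1 f2 g1 g2 : 'rV[C]_n).
Let A := adjmx f1 *m g1 + adjmx f2 *m g2.
Let d1 := dot g1 f1.
Let d2 := dot g2 f2.
Let e21 := dot g2 f1.
Let e12 := dot g1 f2.

Lemma rank2_ub (l : C) (v : 'rV[C]_n) :
  v *m A = l *: v -> v != 0 -> l != 0 ->
  (l - d1) * (l - d2) = e21 * e12.
Proof.
move=> hv v0 l0.
set u1 := dot v f1; set u2 := dot v f2.
have hv' : l *: v = u1 *: g1 + u2 *: g2 by rewrite -hv mulmxDr !dot_mulA.
have E1 : l * u1 = u1 * d1 + u2 * e21.
  by rewrite /u1 -dotZl hv' dotDl !dotZl.
have E2 : l * u2 = u1 * e12 + u2 * d2.
  by rewrite /u2 -dotZl hv' dotDl !dotZl.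
have X1 : (l - d1) * u1 - e21 * u2 = 0.
  by rewrite mulrBl E1; ring.
have X2 : (l - d2) * u2 - e12 * u1 = 0.
  by rewrite mulrBl E2; ring.
have [u10|u10] := eqVneq u1 0.
  have [u20|u20] := eqVneq u2 0.
    move: hv'; rewrite u10 u20 !scale0r addr0 => /eqP.
    by rewrite scaler_eq0 (negbTE l0) (negbTE v0).
  apply: (mulIf u20).
  have -> : (l - d1) * (l - d2) * u2 =
    (l - d1) * ((l - d2) * u2 - e12 * u1) + e12 * ((l - d1) * u1 - e21 * u2)
      + e21 * e12 * u2 by ring.
  by rewrite X1 X2 !mulr0 !add0r.
apply: (mulIf u10).
have -> : (l - d1) * (l - d2) * u1 =
  (l - d2) * ((l - d1) * u1 - e21 * u2) + e21 * ((l - d2) * u2 - e12 * u1)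
    + e21 * e12 * u1 by ring.
by rewrite X1 X2 !mulr0 !add0r.
Qed.

Lemma rank2_lb_aux (l u1 u2 : C) :
  l * u1 = u1 * d1 + u2 * e21 -> l * u2 = u1 * e12 + u2 * d2 ->
  (u1 != 0) || (u2 != 0) -> `|l| <= specrad A.
Proof.
move=> E1 E2 hu.
have [->|l0] := eqVneq l 0; first by rewrite normr0 specrad_ge0.
set x := u1 *: g1 + u2 *: g2.
have D1 : dot x f1 = l * u1 by rewrite E1 /x dotDl !dotZl.
have D2 : dot x f2 = l * u2 by rewrite E2 /x dotDl !dotZl.
apply: (specrad_lb (v := x)).
  by rewrite mulmxDr !dot_mulA D1 D2 /x scalerDr !scalerA.
apply/eqP => x0; move: hu D1 D2; rewrite x0 !dot0l => /orP[] hu /esym/eqP.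
  by rewrite mulf_eq0 (negbTE l0) (negbTE hu).
by move=> _ /esym/eqP; rewrite mulf_eq0 (negbTE l0) (negbTE hu).
Qed.

Lemma rank2_lb (l : C) :
  (l - d1) * (l - d2) = e21 * e12 -> `|l| <= specrad A.
Proof.
move=> h.
case: (boolP ((e21 != 0) || (l - d1 != 0))) => c1.
  apply: (rank2_lb_aux (u1 := e21) (u2 := l - d1)) => //.
    ring.
  by rewrite mulrC -h; ring.
case: (boolP ((l - d2 != 0) || (e12 != 0))) => c2.
  apply: (rank2_lb_aux (u1 := l - d2) (u2 := e12)) => //.
    by rewrite -[e12 * e21]mulrC -h; ring.
  ring.
move: c1 c2; rewrite !negb_or !negbK => /andP[/eqP a /eqP b] /andP[/eqP c /eqP d].
apply: (rank2_lb_aux (u1 := 1) (u2 := 0)); last by rewrite oner_neq0.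
  by move/eqP: b; rewrite subr_eq0 => /eqP ->; ring.
by rewrite d; ring.
Qed.

End Rank2.


Lemma dot_delta n (v : 'rV[C]_n) k : dot v (delta_mx 0 k) = v 0 k.
Proof.
rewrite /dot (bigD1 k) //= big1 => [|j jk]; first by rewrite !mxE !eqxx /= rmorph1 mulr1 addr0.
by rewrite !mxE eqxx /= (negbTE jk) /= rmorph0 mulr0.
Qed.

Lemma inH_delta rc n (k : 'I_n) : inH rc (delta_mx 0 k : 'rV[C]_n).
Proof. by move=> j; case: rc => //=; rewrite mxE realn. Qed.

Definition realmx m n (M : 'M[C]_(m, n)) := map_mx Num.conj M = M.

Lemma inH_realmx n (f : 'rV[C]_n) : inH true f <-> realmx f.
Proof.
split => [h|h k].
  by apply/matrixP => i k; rewrite !ord1 mxE; apply/CrealP; exact: h.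
by rewrite /scal; apply/CrealP; rewrite -{2}h mxE.
Qed.

Lemma dot_real n (f g : 'rV[C]_n) : realmx f -> realmx g -> dot f g \is Num.real.
Proof.
move=> hf hg; apply/CrealP; rewrite conj_dot /dot; apply: eq_bigr => k _.
by rewrite -{1}hg -{2}hf !mxE mulrC.
Qed.

Lemma adjmx_sum m n (I : Type) (r : seq I) (P : pred I) (M : I -> 'M[C]_(m, n)) :
  adjmx (\sum_(i <- r | P i) M i) = \sum_(i <- r | P i) adjmx (M i).
Proof.
elim/big_rec2: _ => [|i s t _ IH]; first by rewrite adjmx0.
by rewrite adjmxD IH.
Qed.

Lemma map_adjmx m n (M : 'M[C]_(m, n)) : map_mx Num.conj (adjmx M) = adjmx (map_mx Num.conj M).
Proof. by apply/matrixP => i j; rewrite !mxE. Qed.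

Section Frame.
Variables (n N : nat) (F : 'I_N -> 'rV[C]_n).
Let S := frame_op F.

Lemma frame_mul (x : 'rV[C]_n) : x *m S = \sum_i dot x (F i) *: F i.
Proof. by rewrite /S /frame_op mulmx_sumr; apply: eq_bigr => i _; rewrite dot_mulA. Qed.

Lemma frame_adj : adjmx S = S.
Proof.
rewrite /S /frame_op adjmx_sum; apply: eq_bigr => i _.
by rewrite adjmxM adjmxK.
Qed.

Lemma frame_real : (forall i, realmx (F i)) -> realmx S.
Proof.
move=> h; rewrite /realmx /S /frame_op map_mx_sum; apply: eq_bigr => i _.
by rewrite map_mxM map_adjmx h.
Qed.

Lemma sum_setT (V : nmodType) (h : 'I_N -> V) : \sum_(i in [set: 'I_N]) h i = \sum_i h i.
Proof. by apply: eq_bigl => i; rewrite in_setT. Qed.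

Lemma frame_unit rc : is_frame rc F -> S \in unitmx.
Proof.
move=> [_ hsp]; rewrite -row_free_unit; apply: inj_row_free => v hv.
have h0 : \sum_i dot v (F i) * (dot v (F i))^* = 0.
  have := congr1 (fun x => dot x v) hv; rewrite dot0l frame_mul dot_suml => H.
  by rewrite -[RHS]H; apply: eq_bigr => i _; rewrite conj_dot.
have hz i : dot v (F i) = 0.
  have := @psumr_eq0P C _ predT (fun i => dot v (F i) * (dot v (F i))^*)
    (fun i _ => ltac:(by rewrite /= -normCK exprn_ge0)) h0 i isT.
  by rewrite -normCK => /eqP; rewrite expf_eq0 /= normr_eq0 => /eqP.
apply/rowP => k; rewrite mxE -dot_delta.
have [c [_ ->]] := hsp _ (inH_delta rc k).
by rewrite dot_sumr big1 // => i _; rewrite hz mulr0.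
Qed.

Lemma dual_id rc (G : 'I_N -> 'rV[C]_n) :
  (forall f, inH rc f -> f = \sum_i dot f (F i) *: G i) ->
  \sum_i adjmx (F i) *m G i = 1%:M.
Proof.
move=> h; apply/row_matrixP => k.
rewrite !rowE mulmx_sumr mulmx1 [X in _ = X](h _ (inH_delta rc k)).
by apply: eq_bigr => i _; rewrite dot_mulA.
Qed.


Section Canon.
Hypothesis Su : S \in unitmx.
Let Si := invmx S.

Lemma inv_adj : adjmx Si = Si.
Proof. by rewrite /Si /adjmx map_invmx trmx_inv -/(adjmx S) frame_adj. Qed.

Lemma canon_eq1 f : f = \sum_i dot f (F i) *: canonical_dual F i.
Proof.
rewrite /canonical_dual.
have -> : \sum_i dot f (F i) *: (F i *m invmx (frame_op F)) =
  (\sum_i dot f (F i) *: F i) *m Si.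
  by rewrite mulmx_suml; apply: eq_bigr => i _; rewrite scalemxAl.
by rewrite -frame_mul -mulmxA mulmxV // mulmx1.
Qed.

Lemma canon_eq2 f : f = \sum_i dot f (canonical_dual F i) *: F i.
Proof.
rewrite /canonical_dual.
have -> : \sum_i dot f (F i *m invmx (frame_op F)) *: F i =
  (\sum_i dot (f *m Si) (F i) *: F i).
  by apply: eq_bigr => i _; rewrite dot_mxl inv_adj.
by rewrite -frame_mul -mulmxA mulVmx // mulmx1.
Qed.

Lemma canon_id : \sum_i adjmx (F i) *m canonical_dual F i = 1%:M.
Proof.
rewrite /canonical_dual.
have -> : \sum_i adjmx (F i) *m (F i *m invmx (frame_op F)) = S *m Si.
  by rewrite /S /frame_op mulmx_suml; apply: eq_bigr => i _; rewrite mulmxA.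
by rewrite mulmxV.
Qed.

Lemma canon_dual rc : is_frame rc F -> is_dual rc F (canonical_dual F).
Proof.
move=> [hF hsp].
have hG : forall i, inH rc (canonical_dual F i).
  case: rc hF {hsp} => hF i; last by [].
  apply/inH_realmx; rewrite /realmx /canonical_dual map_mxM map_invmx.
  have -> : map_mx Num.conj (F i) = F i by apply/inH_realmx.
  by rewrite (frame_real (fun j => proj1 (inH_realmx _) (hF j))).
split; last by move=> f _; split; [exact: canon_eq1 | exact: canon_eq2].
split=> // f hf; exists (fun i => dot f (F i)); split.
  case: rc hF hsp hG hf => // hF _ _ hf i.
  by apply: dot_real; apply/inH_realmx.
by rewrite sum_setT; exact: canon_eq1.
Qed.

End Canon.


Lemma scalN rc (z : C) : scal rc z -> scal rc (- z).
Proof. by case: rc => //=; rewrite rpredN. Qed.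

Lemma adj_entry (f g : 'rV[C]_n) k l : (adjmx f *m g) k l = (f 0 k)^* * g 0 l.
Proof. by rewrite !mxE big_ord1 !mxE. Qed.

Lemma split_id rc (U : {set 'I_N}) (G1 G2 : 'I_N -> 'rV[C]_n) :
  (forall x, inspan rc F U x -> inspan rc F (~: U) x -> x = 0) ->
  (forall i, inH rc (G1 i)) -> (forall i, inH rc (G2 i)) ->
  \sum_i adjmx (F i) *m G1 i = \sum_i adjmx (F i) *m G2 i ->
  \sum_(i in U) adjmx (F i) *m G1 i = \sum_(i in U) adjmx (F i) *m G2 i.
Proof.
move=> hU h1 h2 heq.
pose h i := G1 i - G2 i.
have split (P : pred 'I_N) : \sum_(i | P i) adjmx (F i) *m G1 i - \sum_(i | P i) adjmx (F i) *m G2 i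
   = \sum_(i | P i) adjmx (F i) *m h i.
  by rewrite -sumrB; apply: eq_bigr => i _; rewrite mulmxBr.
apply/eqP; rewrite -subr_eq0 split; apply/eqP.
set D := \sum_(i in U) _.
set D' := \sum_(i in ~: U) adjmx (F i) *m h i.
have DD : D + D' = 0.
  have := split predT; rewrite heq subrr => /esym.
  rewrite (bigID (fun i => i \in U)) /=.
  have -> : D' = \sum_(i | i \notin U) adjmx (F i) *m h i.
    by apply: eq_bigl => i; rewrite in_setC.
  by [].
have hr i l : scal rc ((h i 0 l)^*).
  case: rc hU h1 h2 => // _ h1 h2; rewrite /scal.
  by rewrite /h !mxE CrealJ rpredB //; [exact: h1 | exact: h2].
apply/matrixP => k l; rewrite mxE.
have eD j : \sum_(i in U) ((h i 0 l)^* *: F i) 0 j = (D j l)^*.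
  rewrite /D summxE rmorph_sum; apply: eq_bigr => i _.
  by rewrite adj_entry !mxE rmorphM /= conjCK mulrC.
have eD' j : \sum_(i in ~: U) ((- (h i 0 l)^*) *: F i) 0 j = - (D' j l)^*.
  rewrite /D' summxE rmorph_sum -sumrN; apply: eq_bigr => i _.
  by rewrite adj_entry !mxE rmorphM /= conjCK mulNr mulrC.
have DD' j : D j l = - D' j l.
  by have := congr1 (fun M : 'M[C]_n => M j l) DD; rewrite !mxE => /eqP; rewrite addr_eq0 => /eqP.
pose x := \sum_(i in U) (h i 0 l)^* *: F i.
have x1 : inspan rc F U x by exists (fun i => (h i 0 l)^*).
have x2 : inspan rc F (~: U) x.
  exists (fun i => - (h i 0 l)^*); split; first by move=> i; apply: scalN.
  by apply/rowP => j; rewrite /x !summxE eD eD' DD' rmorphN.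
have := congr1 (fun M : 'rV[C]_n => (M 0 k)^*) (hU x x1 x2).
by rewrite /x summxE eD conjCK !mxE rmorph0 /=.
Qed.


Lemma tr_sum (I : Type) (r : seq I) (P : pred I) (M : I -> 'M[C]_n) :
  \tr (\sum_(i <- r | P i) M i) = \sum_(i <- r | P i) \tr (M i).
Proof.
elim/big_rec2: _ => [|i x y _ IH]; first by rewrite mxtrace0.
by rewrite mxtraceD ?IH // -IH.
Qed.

Lemma trU (G : 'I_N -> 'rV[C]_n) (U : {set 'I_N}) :
  \tr (\sum_(i in U) adjmx (F i) *m G i) = \sum_(i in U) dot (G i) (F i).
Proof. by rewrite tr_sum; apply: eq_bigr => i _; rewrite tr_adj. Qed.

Lemma trsq (G : 'I_N -> 'rV[C]_n) (U : {set 'I_N}) :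
  let T := \sum_(i in U) adjmx (F i) *m G i in
  \tr (T *m T) = \sum_(i in U) \sum_(j in U) dot (G i) (F j) * dot (G j) (F i).
Proof.
rewrite /= mulmx_suml tr_sum; apply: eq_bigr => i _.
rewrite mulmx_sumr tr_sum; apply: eq_bigr => j _.
by rewrite -mulmxA (mulmxA (G i)) dotE mul_scalar_mx -scalemxAr mxtraceZ tr_adj.
Qed.

Lemma eras1 (q : 'I_N -> C) (G : 'I_N -> 'rV[C]_n) i :
  erasure_op q F G [set i] = adjmx (F i) *m (q i *: G i).
Proof. by rewrite /erasure_op big_set1 scalemxAr. Qed.

Lemma eras2 (q : 'I_N -> C) (G : 'I_N -> 'rV[C]_n) i j : i != j ->
  erasure_op q F G [set i; j] =
  adjmx (F i) *m (q i *: G i) + adjmx (F j) *m (q j *: G j).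
Proof.
move=> ij; rewrite /erasure_op big_setU1 ?big_set1 ?scalemxAr //.
by rewrite in_set1.
Qed.

Lemma Rmp_lb m (q : 'I_N -> C) (G : 'I_N -> 'rV[C]_n) (L : {set 'I_N}) :
  #|L| == m -> specrad (erasure_op q F G L) <= Rmp m q F G.
Proof.
move=> hL; apply: (bm_ub (F := fun L => specrad (erasure_op q F G L))) => //.
  by move=> ? _; exact: specrad_ge0.
by rewrite mem_index_enum.
Qed.

End Frame.

Lemma NB (a b c s l : C) : 0 <= a -> a <= c -> 0 <= b -> b <= c -> 0 <= s ->
  (l - a) * (l - b) = s ^+ 2 -> `|l| <= c + s.
Proof.
move=> a0 ac b0 bc s0 h.
have c0 : 0 <= c by apply: le_trans ac.
rewrite real_leNgt ?realD ?ger0_real ?normr_ge0 ?addr_ge0 //; apply/negP => hl.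
have ha : s < `|l - a|.
  apply: lt_le_trans (lerB_dist l a); rewrite (ger0_norm a0).
  by rewrite ltrBrDr; apply: le_lt_trans hl; rewrite addrC lerD2r.
have hb : s < `|l - b|.
  apply: lt_le_trans (lerB_dist l b); rewrite (ger0_norm b0).
  by rewrite ltrBrDr; apply: le_lt_trans hl; rewrite addrC lerD2r.
have := ltr_pM s0 s0 ha hb; rewrite -normrM h expr2 -expr2 ger0_norm ?exprn_ge0 //.
by rewrite expr2 ltxx.
Qed.

Lemma RE (z a : C) : 'Re z = a -> `|z| <= a -> z = a.
Proof.
move=> hr hn.
have a0 : 0 <= a by apply: le_trans hn; exact: normr_ge0.
have h2 : `|z| ^+ 2 <= a ^+ 2.
  by rewrite ler_pXn2r // nnegrE normr_ge0.
move: h2; rewrite normC2_Re_Im hr -lerBrDl subrr => him.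
have : 'Im z ^+ 2 = 0.
  by apply/eqP; rewrite eq_le him -real_normK ?Creal_Im // exprn_ge0 // normr_ge0.
move/eqP; rewrite expf_eq0 /= => /eqP him0.
by rewrite [z]Crect hr him0 mulr0 addr0.
Qed.

End Aux.
Theorem corollary3p1 (C : numClosedFieldType) (realcase : bool) (n N : nat)
  (F : 'I_N -> 'rV[C]_n) (p : 'I_N -> C) (P : 'M[C]_n) :
  (0 < n)%N -> (n <= N)%N ->
  is_frame realcase F ->
  probability_seq p ->
  (forall i, \sum_(j < N) p j - p i != 0) ->
  (* P = S_F^{-1/2} *)
  psd P -> P *m P = invmx (frame_op F) ->
  let q := weight n p in
  let v := fun i => q i * dot (F i *m P) (F i *m P) in
  let c := \big[Num.max/0]_(i < N) v i in
  let U1 := [set i | v i == c] in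
  let U2 := ~: U1 in
  (forall x, inspan realcase F U1 x -> inspan realcase F U2 x -> x = 0) ->
  (2 <= #|U1|)%N ->
  (forall i j, i != j ->
     `|dot (F i *m P) (F j *m P)| =
     sqrtC ((q i * q j)^-1 *
            ((n%:R - \sum_(k < N) (q k ^+ 2)^-1) /
             \sum_(r < N) \sum_(s < N | s != r) (q r * q s)^-1))) ->
  opt2 realcase q F (canonical_dual F).
Proof.
move=> n0 nN hF [hp01 hp1] hpi [hPa _] hPP q v c U1 U2 hU hcard hK.
have Su : frame_op F \in unitmx := frame_unit hF.
set Gt := canonical_dual F.
have hGt : is_dual realcase F Gt := canon_dual Su hF.
have Xt i j : dot (Gt i) (F j) = dot (F i *m P) (F j *m P).
  by rewrite /Gt /canonical_dual -hPP mulmxA dot_mxr hPa.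
have N2 : (2 <= N)%N.
  by apply: leq_trans hcard _; rewrite -[X in (_ <= X)%N]card_ord max_card.
have qpos i : 0 < q i.
  rewrite /q /weight hp1; apply: mulr_gt0.
    apply: divr_gt0 => //; rewrite lt_def subr_ge0.
    have := hpi i; rewrite hp1 => ->.
    by case/andP: (hp01 i).
  by apply: divr_gt0; rewrite ltr0n // subn_gt0.
have qr i : q i \is Num.real by rewrite gtr0_real.
have qn0 i : q i != 0 by rewrite (gt_eqF (qpos i)).
have vE i : v i = q i * dot (Gt i) (F i) by rewrite Xt.
have v0 i : 0 <= v i by apply: mulr_ge0; [exact: ltW | exact: dot_ge0].
have vc i : v i <= c.
  by apply: (bm_ub (F := v)) => //; rewrite mem_index_enum.
have c0 : 0 <= c by apply: bm_ge0.
have U1c i : i \in U1 -> v i = c by rewrite inE => /eqP.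
have other i : i \in U1 -> exists j, (j \in U1) && (j != i).
  move=> iU; have : (0 < #|U1 :\ i|)%N.
    by move: hcard; rewrite (cardsD1 i) iU.
  by case/card_gt0P => j; rewrite in_setD1 andbC => ?; exists j.
have [i0 i0U] : exists i0, i0 \in U1.
  by apply/card_gt0P; apply: leq_trans hcard.
have [j0 /andP [j0U j0i0]] := other i0 i0U.
move: hK; set Kp := (_ / _) => hK.
have Kpair2 i j : i != j -> dot (Gt i) (F j) * dot (Gt j) (F i) = (q i * q j)^-1 * Kp.
  by move=> ij; rewrite !Xt normC2_dot (hK i j ij) sqrtCK.
have Kpair i j : i != j -> q i * q j * (dot (Gt i) (F j) * dot (Gt j) (F i)) = Kp.
  by move=> ij; rewrite Kpair2 // mulrA divrr ?mul1r // unitfE mulf_neq0.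
have Kp0 : 0 <= Kp.
  rewrite -(Kpair j0 i0 j0i0) !Xt normC2_dot.
  by rewrite mulr_ge0 ?exprn_ge0 ?normr_ge0 // mulr_ge0 // ltW.
set s := sqrtC Kp.
have s0 : 0 <= s by rewrite sqrtC_ge0.
have s2 : s ^+ 2 = Kp by rewrite sqrtCK.
have Xtr i : dot (Gt i) (F i) \is Num.real by rewrite Xt ger0_real ?dot_ge0.
have R1c : Rmp 1 q F Gt <= c.
  apply: bm_le => // L /cards1P [i ->].
  by rewrite eras1 specrad_rank1 dotZl -vE ger0_norm.
have Theq G' : is_dual realcase F G' ->
  \sum_(i in U1) adjmx (F i) *m G' i = \sum_(i in U1) adjmx (F i) *m Gt i.
  move=> hG'; apply: (split_id (rc := realcase)) => //.
  - exact: hG'.1.1.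
  - exact: hGt.1.1.
  rewrite (dual_id (fun f hf => (hG'.2 f hf).1)) canon_id //.
have treq G' : is_dual realcase F G' ->
  \sum_(i in U1) dot (G' i) (F i) = \sum_(i in U1) dot (Gt i) (F i).
  by move=> hG'; rewrite -!trU Theq.
have sumXtr : \sum_(i in U1) dot (Gt i) (F i) \is Num.real.
  by apply: rpred_sum => i _.
have ReS G' : is_dual realcase F G' ->
  \sum_(i in U1) 'Re (dot (G' i) (F i)) = \sum_(i in U1) dot (Gt i) (F i).
  by move=> hG'; rewrite -raddf_sum treq //; apply/Creal_ReP.
have ReB G' i : q i * 'Re (dot (G' i) (F i)) <= Rmp 1 q F G'.
  rewrite -(ReMl (qr i)); apply: le_trans (leif_Re_Creal _).1 _.
  by rewrite -dotZl -specrad_rank1 -eras1 Rmp_lb // cards1.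
have hasU1 : has (fun i => i \in U1) (index_enum 'I_N).
  by apply/hasP; exists i0 => //; rewrite mem_index_enum.
have opt1Gt : opt1 realcase q F Gt.
  split => // G' hG'; apply: le_trans R1c _.
  have R0 : 0 <= Rmp 1 q F G' by apply: bm_ge0 => L _; exact: specrad_ge0.
  rewrite real_leNgt ?ger0_real //; apply/negP => hlt.
  have each i : i \in U1 -> 'Re (dot (G' i) (F i)) < dot (Gt i) (F i).
    move=> iU; rewrite -(ltr_pM2l (qpos i)) -vE U1c //.
    exact: le_lt_trans (ReB G' i) hlt.
  have := ltr_sum hasU1 each; rewrite ReS // ltxx //.
split => // G' hG'.
have dG' := hG'.1.
have R1G' : Rmp 1 q F G' <= c := le_trans (hG'.2 Gt hGt) R1c.
have diag i : i \in U1 -> dot (G' i) (F i) = dot (Gt i) (F i).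
  have le_i j : j \in U1 -> 'Re (dot (G' j) (F j)) <= dot (Gt j) (F j).
    move=> jU; rewrite -(ler_pM2l (qpos j)) -vE U1c //.
    exact: le_trans (ReB G' j) R1G'.
  have sum0 : \sum_(j in U1) (dot (Gt j) (F j) - 'Re (dot (G' j) (F j))) = 0.
    by rewrite sumrB ReS // subrr.
  move=> iU.
  have hz := @psumr_eq0P C 'I_N (fun j => j \in U1)
    (fun j => dot (Gt j) (F j) - 'Re (dot (G' j) (F j))).
  have := hz (fun j jU => ltac:(by rewrite /= subr_ge0 le_i)) sum0 i iU.
  move/eqP; rewrite subr_eq0 => /eqP hre.
  apply: RE; first by rewrite hre.
  rewrite -(ler_pM2l (qpos i)) -vE U1c // -(gtr0_norm (qpos i)) -normrM -dotZl.
  by rewrite -specrad_rank1 -eras1; apply: le_trans R1G'; rewrite Rmp_lb // cards1.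
pose OD (G : 'I_N -> 'rV[C]_n) := \sum_(i in U1) \sum_(j in U1 | j != i)
   dot (G i) (F j) * dot (G j) (F i).
have split2 (G : 'I_N -> 'rV[C]_n) :
  \sum_(i in U1) \sum_(j in U1) dot (G i) (F j) * dot (G j) (F i) =
  \sum_(i in U1) dot (G i) (F i) * dot (G i) (F i) + OD G.
  by rewrite /OD -big_split; apply: eq_bigr => i iU; rewrite (bigD1 i iU).
have ODeq : OD G' = OD Gt.
  have h1 := trsq F G' U1; have h2 := trsq F Gt U1; simpl in h1, h2.
  have T12 : \sum_(i in U1) \sum_(j in U1) dot (G' i) (F j) * dot (G' j) (F i) =
     \sum_(i in U1) \sum_(j in U1) dot (Gt i) (F j) * dot (Gt j) (F i).
    by rewrite -h1 -h2 Theq.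
  move: T12; rewrite !split2.
  have -> : \sum_(i in U1) dot (G' i) (F i) * dot (G' i) (F i) =
            \sum_(i in U1) dot (Gt i) (F i) * dot (Gt i) (F i).
    by apply: eq_bigr => i iU; rewrite diag.
  by move/addrI.
have ODGt : OD Gt = \sum_(i in U1) \sum_(j in U1 | j != i) (q i * q j)^-1 * Kp.
  apply: eq_bigr => i _; apply: eq_bigr => j /andP [_ ji].
  by rewrite Kpair2 // eq_sym.
have ODr : OD Gt \is Num.real.
  rewrite ODGt; apply: rpred_sum => i _; apply: rpred_sum => j _.
  by apply: rpredM; [rewrite rpredV; apply: rpredM | exact: ger0_real].
case: (boolP [exists i, [exists j, [&& i \in U1, j \in U1, i != j &
   Kp <= 'Re (q i * q j * (dot (G' i) (F j) * dot (G' j) (F i)))]]]);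
  last first.
  move=> hno; exfalso.
  have lt_ij i j : i \in U1 -> (j \in U1) && (j != i) ->
    'Re (dot (G' i) (F j) * dot (G' j) (F i)) < (q i * q j)^-1 * Kp.
    move=> iU /andP[jU ji].
    have : ~~ (Kp <= 'Re (q i * q j * (dot (G' i) (F j) * dot (G' j) (F i)))).
      by move/existsPn: hno => /(_ i) /existsPn /(_ j); rewrite iU jU eq_sym ji.
    rewrite -real_ltNge ?Creal_Re ?ger0_real // => h.
    rewrite ltr_pdivlMl; last by apply: mulr_gt0.
    by move: h; rewrite (ReMl (rpredM (qr i) (qr j))).
  have hin i : i \in U1 -> has (fun j => (j \in U1) && (j != i)) (index_enum 'I_N).
    move=> iU; case: (other i iU) => j hj.
    by apply/hasP; exists j => //; rewrite mem_index_enum.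
  have := ltr_sum hasU1 (fun i iU => ltr_sum (hin i iU) (fun j => lt_ij i j iU)).
  rewrite -ODGt.
  have -> : \sum_(i in U1) \sum_(j in U1 | j != i) 'Re (dot (G' i) (F j) * dot (G' j) (F i))
     = 'Re (OD G').
    by rewrite /OD raddf_sum; apply: eq_bigr => i _; rewrite raddf_sum.
  by rewrite ODeq (Creal_ReP _ ODr) ltxx.
move=> /existsP [i /existsP [j /and4P [iU jU ij hz]]].
set z := q i * q j * (dot (G' i) (F j) * dot (G' j) (F i)).
pose w0 := sqrtC z.
pose w := if 0 <= 'Re w0 then w0 else - w0.
have hw2 : w ^+ 2 = z by rewrite /w; case: ifP => _; rewrite ?sqrrN sqrtCK.
have hwre : 0 <= 'Re w.
  rewrite /w; case: ifP => // /negbT h.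
  by rewrite raddfN oppr_ge0 ltW // real_ltNge ?Creal_Re ?real0.
have hws : s <= 'Re w.
  rewrite -(ler_pXn2r (n:=2)) ?nnegrE //.
  rewrite s2; apply: le_trans hz _.
  rewrite -/z -hw2 expr2 ReM -expr2 gerBl -expr2 -real_normK ?Creal_Im //.
  exact: exprn_ge0 (normr_ge0 _).
have R2c : Rmp 2 q F Gt <= c + s.
  apply: bm_le; first by apply: addr_ge0.
  move=> L /cards2P [a [b [ab ->]]]; rewrite eras2 //.
  apply: specrad_ub; first by apply: addr_ge0.
  move=> l x hx x0.
  have [->|l0] := eqVneq l 0; first by rewrite normr0 addr_ge0.
  have := rank2_ub hx x0 l0; rewrite !dotZl -!vE.
  have -> : q b * dot (Gt b) (F a) * (q a * dot (Gt a) (F b)) = s ^+ 2.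
    by rewrite s2 -(Kpair a b ab); ring.
  move=> h; exact: (NB (v0 a) (vc a) (v0 b) (vc b) s0 h).
have hl : `|c + w| <= Rmp 2 q F G'.
  have := Rmp_lb F q G' (L := [set i; j]) (m := 2); rewrite cards2 ij eras2 // => /(_ isT).
  apply: le_trans; apply: rank2_lb.
  rewrite !dotZl !diag // -!vE !U1c //.
  have -> : c + w - c = w by ring.
  by rewrite -expr2 hw2 /z; ring.
have hlow : c + s <= `|c + w|.
  apply: le_trans _ (leif_Re_Creal (c + w)).1.
  by rewrite raddfD /= (Creal_ReP _ (ger0_real c0)) lerD2l.
exact: le_trans R2c (le_trans hlow hl).
Qed.
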